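(* Let $\mathbb{F}$ be an infinite field with $\operatorname{char}(\mathbb{F})\neq 2$, let $G$ be a group with a group involution $\ast$ and a non-trivial orientation $\sigma$ such that $gg^\ast\in N=\ker\sigma$ for all $g\in G$, and let $\circledast$ be the associated oriented involution of $\mathbb{F}G$. Assume $\mathbb{F}G$ is normal with respect to $\circledast$, and let $g,h\in G$ with $gh\neq hg$. (1) If either $\sigma(g)=\sigma(h)=1$, or $\sigma(g)=-1$ and $\sigma(h)=1$, then $g^2h=hg^2$. (2) If either $\sigma(g)=1$ and $\sigma(h)=-1$, or $\sigma(g)=\sigma(h)=-1$, then $g^2h=(g^2h)^\ast$. In particular, $(m^2,n)=1$ for all $m,n\in N$.
   Context: A group involution on $G$ is a map $\ast:G\to G$ with $(gh)^\ast=h^\ast g^\ast$ and $(g^\ast)^\ast=g$. An orientation is a group homomorphism $\sigma:G\to\{\pm1\}$. The oriented involution is $(\sum_g\alpha_g g)^\circledast=\sum_g\alpha_g\sigma(g)g^\ast$ on $\mathbb{F}G$. $\mathbb{F}G$ is normal if $\alpha\alpha^\circledast=\alpha^\circledast\alpha$ for all $\alpha\in\mathbb{F}G$. $(x,y)=x^{-1}y^{-1}xy$. *)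

(* Defs.v *)
(* The group ring FG is represented
   by finite formal sums (lists of (coefficient, group element)); two formal
   sums denote the same element of FG iff they have the same coefficient
   function [fg_coef]. *)
From HB Require Import structures.
From mathcomp Require Import all_boot all_order all_algebra.
Set Implicit Arguments. Unset Strict Implicit. Unset Printing Implicit Defensive.
Import GRing.Theory.

Section GroupRing.
Variables (F : fieldType) (G : groupType).

Definition group_involution (star : G -> G) : Prop :=
  (forall g h : G, star (g * h)%g = (star h * star g)%g) /\ involutive star.

Definition orientation (sigma : G -> int) : Prop :=
  (forall g : G, sigma g = 1%R \/ sigma g = (-1)%R) /\
  (forall g h : G, sigma (g * h)%g = (sigma g * sigma h)%R).

Definition fg := seq (F * G).

Definition fg_coef (a : fg) (x : G) : F :=
  (\sum_(p <- a | p.2 == x) p.1)%R.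

Definition fg_mul (a b : fg) : fg :=
  [seq ((p.1 * q.1)%R, (p.2 * q.2)%g) | p <- a, q <- b].

Definition fg_oinv (star : G -> G) (sigma : G -> int) (a : fg) : fg :=
  [seq ((p.1 * (sigma p.2)%:~R)%R, star p.2) | p <- a].

Definition fg_normal (star : G -> G) (sigma : G -> int) : Prop :=
  forall a : fg,
    fg_coef (fg_mul a (fg_oinv star sigma a)) =1
    fg_coef (fg_mul (fg_oinv star sigma a) a).

End GroupRing.

(* Main.v *)
Require Import Defs.
From HB Require Import structures.
From mathcomp Require Import all_boot all_order all_algebra ring.
Import GRing.Theory.
Local Open Scope ring_scope.
Lemma F_aux (F : fieldType) (b : F) : (2%N \notin [pchar F]) -> (b = 1 \/ b = -1) ->
  [/\ b + b != 0, b != 0 & b != - b].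
Proof.
move=> h2 hb.
have two : (2%:R : F) != 0.
  apply: contra h2 => /eqP h; rewrite inE /= h eqxx //.
have bb : b + b != 0.
  case: hb => ->; first by [].
  by rewrite -opprD oppr_eq0.
split => //; first by case: hb => ->; rewrite ?oppr_eq0 oner_eq0.
by apply: contra bb => /eqP {2}->; rewrite subrr.
Qed.

Lemma key (F : fieldType) (G : groupType) (star : G -> G) (sigma : G -> int) :
  (2%N \notin [pchar F]) -> group_involution star -> orientation sigma ->
  (forall g : G, sigma (g * star g)%g = 1) -> fg_normal F star sigma ->
  (forall g : G, g * star g = star g * g)%g /\
  forall x y : G, (x * y != y * x)%g ->
   (sigma x = sigma y -> (x * y = star (y * x))%g) /\
   (sigma x = - sigma y -> (x * y = star (x * y))%g).
Proof.
move=> h2 [sM sK] [sig sigM] sN N.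
have sigS g : sigma (star g) = sigma g.
  have := sN g; rewrite sigM.
  by case: (sig g) => ->; case: (sig (star g)) => ->.
have cst g : (sigma g)%:~R = 1 :> F \/ (sigma g)%:~R = -1 :> F.
  by case: (sig g) => ->; [left|right].
have comm g : (g * star g = star g * g)%g.
  have := N [:: (1, g)] (g * star g)%g.
  rewrite /fg_coef /fg_mul /fg_oinv /= !big_mkcond !big_cons !big_nil /= eqxx.
  case: eqP => [-> //|_].
  rewrite !mul1r addr0 => /eqP.
  by case: (@F_aux F _ h2 (cst g)) => _ /negbTE ->.
split=> // x y nxy.
have := N [:: (1, x); (1, star y)] (x * y)%g.
rewrite /fg_coef big_mkcond [in RHS]big_mkcond /fg_mul /fg_oinv /= !big_cons !big_nil /=.
rewrite !sK sigS eqxx -!sM.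
have nyx : (y * x != x * y)%g by rewrite eq_sym.
rewrite -(comm x) (comm y) (negbTE nyx) !mul1r !mulr1 addr0.
set A := (if _ then _ else _).
set D := (if (star y * y)%g == _ then _ else _).
set C := (if star (x * y)%g == _ then _ else _).
set C' := (if star (y * x)%g == _ then _ else _).
move=> e.
have {e} e : (sigma y)%:~R + C = C' :> F.
  transitivity (A + ((sigma y)%:~R + (C + D)) - A - D); first ring.
  rewrite e; ring.
have [n1 n2 n3] := @F_aux F _ h2 (cst y).
split=> hs.
  move: e; rewrite /C' /C hs.
  case: (star (y * x) =P x * y)%g => [-> //|_].
  by case: eqP => _; rewrite ?addr0 => /eqP; rewrite ?(negbTE n1) ?(negbTE n2).
move: e; rewrite /C' /C hs intrN.
case: (star (x * y) =P x * y)%g => [-> //|_].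
by case: eqP => _; rewrite addr0 => /eqP; rewrite ?(negbTE n3) ?(negbTE n2).
Qed.

Theorem lemma7 (F : fieldType) (G : groupType) (star : G -> G) (sigma : G -> int) :
  (* F infinite *)
  (forall s : seq F, exists x : F, x \notin s) ->
  (* char F <> 2 *)
  (2%N \notin [pchar F]%R) ->
  group_involution star ->
  orientation sigma ->
  (* sigma non-trivial *)
  (exists g : G, sigma g = (-1)%R) ->
  (* g g^* \in N = ker sigma *)
  (forall g : G, sigma (g * star g)%g = 1%R) ->
  fg_normal F star sigma ->
  (forall g h : G, (g * h != h * g)%g ->
     (sigma g = 1%R /\ sigma h = 1%R) \/ (sigma g = (-1)%R /\ sigma h = 1%R) ->
     (g ^+ 2 * h = h * g ^+ 2)%g) /\
  (forall g h : G, (g * h != h * g)%g ->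
     (sigma g = 1%R /\ sigma h = (-1)%R) \/ (sigma g = (-1)%R /\ sigma h = (-1)%R) ->
     (g ^+ 2 * h = star (g ^+ 2 * h))%g) /\
  (forall m n : G, sigma m = 1%R -> sigma n = 1%R -> [~ m ^+ 2, n]%g = 1%g).
Proof.
move=> _ h2 hinv hor _ sN N.
have [comm kk] := @key F G star sigma h2 hinv hor sN N.
case: hinv => sM sK; case: hor => sig sigM.
have SS (x y : G) : (x * y != y * x)%g -> sigma x = sigma y -> (x * y = star (y * x))%g.
  by move=> nxy; case: (kk x y nxy).
have DD (x y : G) : (x * y != y * x)%g -> sigma x = - sigma y -> (x * y = star (x * y))%g.
  by move=> nxy; case: (kk x y nxy).
have ngg (g h : G) : (g * h != h * g)%g -> (g * (g * h) != (g * h) * g)%g.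
  move=> nhg; apply: contra nhg => /eqP E; apply/eqP; apply: (mulgI g).
  by rewrite E mulgA.
have ngg' (g h : G) : (g * h != h * g)%g -> (g * (h * g) != (h * g) * g)%g.
  move=> nhg; apply: contra nhg => /eqP E; apply/eqP; apply: (mulIg g).
  by rewrite -[LHS]mulgA E.
have part1 : forall g h : G, (g * h != h * g)%g ->
     (sigma g = 1%R /\ sigma h = 1%R) \/ (sigma g = (-1)%R /\ sigma h = 1%R) ->
     (g ^+ 2 * h = h * g ^+ 2)%g.
  move=> g h nhg.
  have nhg2 : (h * g != g * h)%g by rewrite eq_sym.
  case=> [[hg hh]|[hg hh]].
    have r1 : (h * g = star g * h)%g.
      have sx : sigma g = sigma (h * g)%g by rewrite sigM hg hh.
      have e1 := SS _ _ (ngg' g h nhg) sx.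
      rewrite sM -(SS _ _ nhg (etrans hg (esym hh))) in e1.
      apply: (mulgI g); by rewrite e1 !mulgA comm.
    have sx : sigma (g * h)%g = sigma g by rewrite sigM hg hh.
    have n2 := ngg g h nhg; rewrite eq_sym in n2.
    have s1 := SS _ _ nhg (etrans hg (esym hh)).
    have s2 := SS _ _ nhg2 (etrans hh (esym hg)).
    have e2 := SS _ _ n2 sx.
    rewrite sM -s2 in e2.
    rewrite sM in s1. rewrite sM in s2.
    have r2 : (g * h = h * star g)%g.
      apply: (mulgI (star g)).
      transitivity (g * (h * g))%g.
        by rewrite [LHS]mulgA -comm -[LHS]mulgA -r1.
      by rewrite mulgA e2 r1 -mulgA.
    have t1 : (star g * star g * h = h * g * g)%g.
      by rewrite -[LHS]mulgA -r1 [LHS]mulgA -r1.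
    have t2 : (star g * star g * h = h * star g * star g)%g.
      by rewrite -[LHS]mulgA -r1 s2 [LHS]mulgA -s1 r2.
    have t3 : (g * g = star g * star g)%g.
      apply: (mulgI h); by rewrite !mulgA -t1 t2.
    by rewrite expg2 {1}t3 t1 mulgA.
  have q1 : sigma g = - sigma h by rewrite hg hh.
  have q2 : sigma h = - sigma g by rewrite hg hh opprK.
  have d1 := DD _ _ nhg q1.
  have d2 := DD _ _ nhg2 q2.
  have sx : sigma (g * h)%g = sigma g by rewrite sigM hg hh mulr1.
  have n2 := ngg g h nhg; rewrite eq_sym in n2.
  have s1 := SS _ _ n2 sx.
  rewrite sM -d1 in s1.
  have gs : star g = g by apply: (mulgI (g * h)%g); rewrite -s1.
  rewrite sM gs in d1; rewrite sM gs in d2.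
  by rewrite expg2 -mulgA d1 mulgA -d2 -mulgA.
split; first exact: part1.
split.
  move=> g h nhg hs.
  have hh : sigma h = -1 by case: hs => -[].
  have q : sigma g = - sigma (g * h)%g by rewrite sigM hh mulrN1 opprK.
  have := DD _ _ (ngg g h nhg) q.
  by rewrite expg2 -mulgA.
move=> m n hm hn; apply/eqP/commgP.
case: (eqVneq (m * n)%g (n * m)%g) => [E|nE].
  apply: commute_sym; apply: commuteX; exact: (esym E).
exact: (part1 m n nE (or_introl (conj hm hn))).
Qed.
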